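(* Let $(f_n)_{n\ge 0}$ be a sequence of positive real numbers (not depending on $a$) and, for $a>0$, let \[ f(a,x)=\sum_{n=0}^{\infty} f_n\frac{(a)_n}{n!}x^n , \] regarded as a formal power series in $x$. Let $b>a>0$ and $\delta>0$, and write \[ \varphi_{a,b,\delta}(x)=f(a+\delta,x)f(b,x)-f(b+\delta,x)f(a,x)=\sum_{m=0}^{\infty}\varphi_m x^m . \] Then $\varphi_0=\varphi_1=0$, and: (i) if the sequence $\{f_n/f_{n-1}\}_{n\ge1}$ is decreasing, then $\varphi_m>0$ for all $m\ge 2$, so that $a\mapsto f(a,x)$ is strictly log-concave for $x>0$; (ii) if the sequence $\{f_n/f_{n-1}\}_{n\ge1}$ is increasing, then $\varphi_m<0$ for all $m\ge 2$, so that $a\mapsto f(a,x)$ is strictly log-convex for $x>0$.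
   Context: $(a)_n=a(a+1)\cdots(a+n-1)=\Gamma(a+n)/\Gamma(a)$ is the Pochhammer symbol, $(a)_0=1$. Power series are understood formally; the log-concavity/log-convexity statements refer to values $x>0$ at which the series converge. *)

(* Defs.v *)
From Stdlib Require Import Reals.
From Coquelicot Require Import Coquelicot.
Open Scope R_scope.

Fixpoint poch (a : R) (n : nat) : R :=
  match n with
  | O => 1
  | S k => poch a k * (a + INR k)
  end.

Definition coef (f : nat -> R) (a : R) (n : nat) : R :=
  f n * poch a n / INR (Factorial.fact n).

(* value of the series f(a,x) (meaningful when it converges) *)
Definition fser (f : nat -> R) (a x : R) : R :=
  Series (fun n => coef f a n * x ^ n).

(* m-th coefficient of the formal power series
   phi_{a,b,delta}(x) = f(a+d,x) f(b,x) - f(b+d,x) f(a,x)  (Cauchy product) *)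
Definition phi (f : nat -> R) (a b d : R) (m : nat) : R :=
  sum_f_R0 (fun k => coef f (a + d) k * coef f b (m - k)
                     - coef f (b + d) k * coef f a (m - k)) m.

Definition strictly_concave_pos (g : R -> R) : Prop :=
  forall u v t, 0 < u -> 0 < v -> u <> v -> 0 < t < 1 ->
    t * g u + (1 - t) * g v < g (t * u + (1 - t) * v).

Definition strictly_convex_pos (g : R -> R) : Prop :=
  forall u v t, 0 < u -> 0 < v -> u <> v -> 0 < t < 1 ->
    g (t * u + (1 - t) * v) < t * g u + (1 - t) * g v.

(* Main.v *)
Require Import Defs.
From Stdlib Require Import Reals.
From Coquelicot Require Import Coquelicot.
From Stdlib Require Import Lra Lia.
Open Scope R_scope.


Definition e (al : R) (k : nat) : R := poch al k / INR (Factorial.fact k).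

Lemma poch_pos al n : 0 < al -> 0 < poch al n.
Proof.
  intro H; induction n as [|n IH]; simpl; [lra|].
  apply Rmult_lt_0_compat; [exact IH|]. pose proof (pos_INR n); lra.
Qed.

Lemma e_pos al n : 0 < al -> 0 < e al n.
Proof.
  intro H; unfold e. apply Rdiv_lt_0_compat; [now apply poch_pos|apply INR_fact_lt_0].
Qed.

Lemma e_0 al : e al 0 = 1.
Proof. unfold e; simpl; field. Qed.

Lemma e_S al k : INR (S k) * e al (S k) = (al + INR k) * e al k.
Proof.
  unfold e. rewrite fact_simpl, mult_INR. simpl poch.
  pose proof (INR_fact_lt_0 k). assert (0 < INR (S k)) by (apply lt_0_INR; lia).
  field. lra.
Qed.

Lemma coef_e f al k : coef f al k = f k * e al k.
Proof. unfold coef, e; field. pose proof (INR_fact_lt_0 k); lra. Qed.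

Lemma sum_rev (h : nat -> R) N :
  sum_f_R0 (fun j => h (N - j)%nat) N = sum_f_R0 h N.
Proof.
  induction N as [|N IH].
  - simpl. reflexivity.
  - rewrite decomp_sum by lia. simpl pred.
    rewrite tech5. replace (S N - 0)%nat with (S N) by lia.
    rewrite <- IH. rewrite Rplus_comm. f_equal.
Qed.

Lemma vdm al be n :
  e (al + be) n = sum_f_R0 (fun i => e al i * e be (n - i)) n.
Proof.
  induction n as [|n IH].
  - simpl. rewrite !e_0. ring.
  - assert (Hn : 0 < INR (S n)) by (apply lt_0_INR; lia).
    apply Rmult_eq_reg_l with (INR (S n)); [|lra].
    rewrite e_S, IH. symmetry.
    (* split INR (S n) = INR i + INR (S n - i) *)
    transitivity (sum_f_R0 (fun i => INR i * (e al i * e be (S n - i))) (S n)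
                 + sum_f_R0 (fun i => INR (S n - i) * (e al i * e be (S n - i))) (S n)).
    + rewrite <- plus_sum. rewrite scal_sum. apply sum_eq. intros i Hi.
      rewrite <- Rmult_plus_distr_r. rewrite <- plus_INR.
      replace (i + (S n - i))%nat with (S n) by lia. ring.
    + rewrite decomp_sum by lia. simpl pred.
      rewrite tech5. replace (S n - S n)%nat with 0%nat by lia.
      simpl INR at 1. simpl INR at 3.
      transitivity (sum_f_R0 (fun i => (al + INR i) * (e al i * e be (n - i))) n
                   + sum_f_R0 (fun i => (be + INR (n - i)) * (e al i * e be (n - i))) n).
      * f_equal.
        -- rewrite Rmult_0_l, Rplus_0_l. apply sum_eq. intros i Hi. replace (S n - S i)%nat with (n - i)%nat by lia.
           rewrite <- Rmult_assoc, e_S. ring.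
        -- rewrite Rmult_0_l, Rplus_0_r. apply sum_eq. intros i Hi.
           replace (S n - i)%nat with (S (n - i)) by lia.
           transitivity (e al i * (INR (S (n - i)) * e be (S (n - i)))); [ring|]. rewrite e_S. ring.
      * rewrite <- plus_sum. rewrite (scal_sum _ n). symmetry. apply sum_eq. intros i Hi.
        rewrite <- Rmult_plus_distr_r.
        replace (al + INR i + (be + INR (n - i))) with (al + be + INR n).
        -- ring.
        -- assert (INR n = INR i + INR (n - i)) by (rewrite <- plus_INR; f_equal; lia). lra.
Qed.

Lemma exch (h : nat -> nat -> R) m :
  sum_f_R0 (fun k => sum_f_R0 (fun i => h i k) k) m =
  sum_f_R0 (fun i => sum_f_R0 (fun j => h i (i + j)%nat) (m - i)) m.
Proof.
  induction m as [|m IH].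
  - simpl. reflexivity.
  - rewrite tech5, IH. rewrite (tech5 (fun i => sum_f_R0 _ (S m - i))).
    replace (S m - S m)%nat with 0%nat by lia. simpl (sum_f_R0 _ 0).
    rewrite tech5. rewrite Nat.add_0_r. rewrite <- Rplus_assoc. f_equal.
    rewrite <- plus_sum. apply sum_eq. intros i Hi.
    replace (S m - i)%nat with (S (m - i)) by lia. rewrite tech5.
    replace (i + S (m - i))%nat with (S m) by lia. reflexivity.
Qed.

Definition FF (f : nat -> R) m k := f k * f (m - k)%nat.
Definition gg a b m i j := e a j * e b (m - i - j)%nat.
Definition TT f a b m i :=
  sum_f_R0 (fun j => FF f m (i + j) * (gg a b m i j - gg a b m i (m - i - j))) (m - i).

Lemma phi_decomp f a b d m :
  phi f a b d m = sum_f_R0 (fun i => e d i * TT f a b m i) m.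
Proof.
  unfold phi.
  transitivity (sum_f_R0 (fun k => sum_f_R0 (fun i =>
     FF f m k * e d i * (e a (k - i) * e b (m - k) - e b (k - i) * e a (m - k))) k) m).
  - apply sum_eq. intros k Hk. rewrite !coef_e.
    replace (a + d) with (d + a) by ring. replace (b + d) with (d + b) by ring.
    rewrite !vdm. unfold FF.
    transitivity (f k * f (m - k)%nat * (sum_f_R0 (fun i => e d i * e a (k - i)) k * e b (m - k)
       - sum_f_R0 (fun i => e d i * e b (k - i)) k * e a (m - k))); [ring|].
    rewrite (Rmult_comm (sum_f_R0 _ k) (e b _)), (Rmult_comm (sum_f_R0 _ k) (e a _)).
    rewrite !scal_sum, <- minus_sum, scal_sum. apply sum_eq. intros i Hi. ring.
  - rewrite exch. apply sum_eq. intros i Hi. unfold TT. rewrite scal_sum.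
    apply sum_eq. intros j Hj. unfold gg.
    replace (i + j - i)%nat with j by lia.
    replace (m - (i + j))%nat with (m - i - j)%nat by lia.
    replace (m - i - (m - i - j))%nat with j by lia. ring.
Qed.

Lemma TT_sym f a b m i : (i <= m)%nat ->
  TT f a b m i = / 2 * sum_f_R0 (fun j => (FF f m (i + j) - FF f m j) *
                     (gg a b m i j - gg a b m i (m - i - j))) (m - i).
Proof.
  intro Hi. unfold TT. set (N := (m - i)%nat). set (g := gg a b m i).
  assert (E1 : sum_f_R0 (fun j => FF f m (i + j) * g (N - j)%nat) N
             = sum_f_R0 (fun j => FF f m j * g j) N).
  { rewrite <- (sum_rev (fun j => FF f m j * g j)). apply sum_eq. intros j Hj.
    unfold FF. replace (m - (N - j))%nat with (i + j)%nat by lia.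
    replace (m - (i + j))%nat with (N - j)%nat by lia. ring. }
  assert (E2 : sum_f_R0 (fun j => FF f m j * g (N - j)%nat) N
             = sum_f_R0 (fun j => FF f m (i + j) * g j) N).
  { rewrite <- (sum_rev (fun j => FF f m (i + j) * g j)). apply sum_eq. intros j Hj.
    unfold FF. replace (i + (N - j))%nat with (m - j)%nat by lia.
    replace (m - (m - j))%nat with j by lia.
    replace (N - (N - j))%nat with j by lia. ring. }
  transitivity (sum_f_R0 (fun j => FF f m (i + j) * g j) N
              - sum_f_R0 (fun j => FF f m (i + j) * g (N - j)%nat) N).
  { rewrite <- minus_sum. apply sum_eq. intros; ring. }
  transitivity (/2 * (sum_f_R0 (fun j => FF f m (i + j) * g j) N
              - sum_f_R0 (fun j => FF f m (i + j) * g (N - j)%nat) N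
              - sum_f_R0 (fun j => FF f m j * g j) N
              + sum_f_R0 (fun j => FF f m j * g (N - j)%nat) N)).
  { rewrite E1, E2. field. }
  f_equal. rewrite <- !minus_sum, <- plus_sum. apply sum_eq. intros; ring.
Qed.

Section Ratio.
Variable f : nat -> R.
Hypothesis Hf : forall n, 0 < f n.
Hypothesis Hc : forall n : nat, f (S (S n)) / f (S n) < f (S n) / f n.

Lemma ratio_strict p q : (p < q)%nat -> f (S q) / f q < f (S p) / f p.
Proof.
  intro H. induction H as [|q H IH].
  - apply Hc.
  - eapply Rlt_trans; [apply Hc|exact IH].
Qed.

Lemma ratio_weak p q : (p <= q)%nat -> f (S q) / f q <= f (S p) / f p.
Proof.
  intro H. destruct (Nat.eq_dec p q) as [->|Hne]; [lra|].
  left; apply ratio_strict; lia.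
Qed.

Lemma LF_div p q i : (p <= q)%nat -> f (q + i) / f q <= f (p + i) / f p.
Proof.
  intro H. induction i as [|i IH].
  - rewrite !Nat.add_0_r. unfold Rdiv. rewrite !Rinv_r by (apply Rgt_not_eq, Hf). lra.
  - replace (f (q + S i) / f q) with (f (q + i) / f q * (f (S (q + i)) / f (q + i))).
    2:{ rewrite Nat.add_succ_r. field. split; apply Rgt_not_eq, Hf. }
    replace (f (p + S i) / f p) with (f (p + i) / f p * (f (S (p + i)) / f (p + i))).
    2:{ rewrite Nat.add_succ_r. field. split; apply Rgt_not_eq, Hf. }
    apply Rmult_le_compat.
    + left; apply Rdiv_lt_0_compat; apply Hf.
    + left; apply Rdiv_lt_0_compat; apply Hf.
    + exact IH.
    + apply ratio_weak; lia.
Qed.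

Lemma LF_div_strict p q i : (p < q)%nat -> f (q + S i) / f q < f (p + S i) / f p.
Proof.
  intro H.
  replace (f (q + S i) / f q) with (f (q + i) / f q * (f (S (q + i)) / f (q + i))).
  2:{ rewrite Nat.add_succ_r. field. split; apply Rgt_not_eq, Hf. }
  replace (f (p + S i) / f p) with (f (p + i) / f p * (f (S (p + i)) / f (p + i))).
  2:{ rewrite Nat.add_succ_r. field. split; apply Rgt_not_eq, Hf. }
  assert (H1 := LF_div p q i ltac:(lia)).
  assert (H2 := ratio_strict (p + i) (q + i) ltac:(lia)).
  assert (0 < f (q + i) / f q) by (apply Rdiv_lt_0_compat; apply Hf).
  assert (0 < f (S (q + i)) / f (q + i)) by (apply Rdiv_lt_0_compat; apply Hf).
  apply Rle_lt_trans with (f (p + i) / f p * (f (S (q + i)) / f (q + i))).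
  - apply Rmult_le_compat_r; lra.
  - apply Rmult_lt_compat_l; [|exact H2]. lra.
Qed.
End Ratio.

Lemma div_to_mul (A B C D : R) : 0 < B -> 0 < D -> A / B <= C / D -> A * D <= C * B.
Proof.
  intros HB HD H. apply Rmult_le_compat_r with (r := B * D) in H; [|nra].
  replace (A / B * (B * D)) with (A * D) in H by (field; lra).
  replace (C / D * (B * D)) with (C * B) in H by (field; lra). exact H.
Qed.

Lemma div_to_mul_lt (A B C D : R) : 0 < B -> 0 < D -> A / B < C / D -> A * D < C * B.
Proof.
  intros HB HD H. apply Rmult_lt_compat_r with (r := B * D) in H; [|nra].
  replace (A / B * (B * D)) with (A * D) in H by (field; lra).
  replace (C / D * (B * D)) with (C * B) in H by (field; lra). exact H.
Qed.

Lemma LF_concave f (Hf : forall n, 0 < f n)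
  (Hc : forall n : nat, f (S (S n)) / f (S n) < f (S n) / f n) p q i :
  (p <= q)%nat -> f p * f (q + i)%nat <= f (p + i)%nat * f q.
Proof.
  intro H. pose proof (LF_div f Hf Hc p q i H).
  rewrite Rmult_comm. apply div_to_mul; auto.
Qed.

Lemma LF_concave_strict f (Hf : forall n, 0 < f n)
  (Hc : forall n : nat, f (S (S n)) / f (S n) < f (S n) / f n) p q i :
  (p < q)%nat -> f p * f (q + S i)%nat < f (p + S i)%nat * f q.
Proof.
  intro H. pose proof (LF_div_strict f Hf Hc p q i H).
  rewrite Rmult_comm. apply div_to_mul_lt; auto.
Qed.

Lemma inv_ratio f (Hf : forall n, 0 < f n)
  (Hv : forall n : nat, f (S n) / f n < f (S (S n)) / f (S n)) :
  forall n : nat, (/ f (S (S n))) / (/ f (S n)) < (/ f (S n)) / (/ f n).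
Proof.
  intro n. pose proof (Hf n). pose proof (Hf (S n)). pose proof (Hf (S (S n))).
  replace (/ f (S (S n)) / / f (S n)) with (/ (f (S (S n)) / f (S n))) by (field; lra).
  replace (/ f (S n) / / f n) with (/ (f (S n) / f n)) by (field; lra).
  apply Rinv_lt_contravar; [|apply Hv].
  apply Rmult_lt_0_compat; apply Rdiv_lt_0_compat; auto.
Qed.

Lemma inv_le_cancel x y : 0 < x -> 0 < y -> / x <= / y -> y <= x.
Proof.
  intros Hx Hy H. rewrite <- (Rinv_inv x), <- (Rinv_inv y).
  apply Rinv_le_contravar; [apply Rinv_0_lt_compat; exact Hx|exact H].
Qed.

Lemma inv_lt_cancel x y : 0 < x -> 0 < y -> / x < / y -> y < x.
Proof.
  intros Hx Hy H. rewrite <- (Rinv_inv x), <- (Rinv_inv y).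
  apply Rinv_0_lt_contravar; [apply Rinv_0_lt_compat; exact Hx|exact H].
Qed.

Lemma LF_convex f (Hf : forall n, 0 < f n)
  (Hv : forall n : nat, f (S n) / f n < f (S (S n)) / f (S n)) p q i :
  (p <= q)%nat -> f (p + i)%nat * f q <= f p * f (q + i)%nat.
Proof.
  intro H.
  assert (Hf' : forall n, 0 < / f n) by (intro; apply Rinv_0_lt_compat, Hf).
  pose proof (LF_concave (fun n => / f n) Hf' (inv_ratio f Hf Hv) p q i H) as K.
  simpl in K. pose proof (Hf p). pose proof (Hf q). pose proof (Hf (p+i)%nat). pose proof (Hf (q+i)%nat).
  rewrite <- !Rinv_mult in K. apply inv_le_cancel in K; [exact K|..]; apply Rmult_lt_0_compat; auto.
Qed.

Lemma LF_convex_strict f (Hf : forall n, 0 < f n)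
  (Hv : forall n : nat, f (S n) / f n < f (S (S n)) / f (S n)) p q i :
  (p < q)%nat -> f (p + S i)%nat * f q < f p * f (q + S i)%nat.
Proof.
  intro H.
  assert (Hf' : forall n, 0 < / f n) by (intro; apply Rinv_0_lt_compat, Hf).
  pose proof (LF_concave_strict (fun n => / f n) Hf' (inv_ratio f Hf Hv) p q i H) as K.
  simpl in K. pose proof (Hf p). pose proof (Hf q). pose proof (Hf (p+S i)%nat). pose proof (Hf (q+S i)%nat).
  rewrite <- !Rinv_mult in K. apply inv_lt_cancel in K; [exact K|..]; apply Rmult_lt_0_compat; auto.
Qed.

Lemma EG a b p k : 0 < a -> a < b ->
  poch a (p + k) * poch b p <= poch a p * poch b (p + k).
Proof.
  intros Ha Hab. induction k as [|k IH].
  - rewrite Nat.add_0_r. lra.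
  - rewrite Nat.add_succ_r. simpl poch.
    pose proof (poch_pos a (p + k) Ha). pose proof (poch_pos b p ltac:(lra)).
    pose proof (poch_pos a p Ha). pose proof (poch_pos b (p + k) ltac:(lra)).
    pose proof (pos_INR (p + k)).
    replace (poch a (p + k) * (a + INR (p + k)) * poch b p) with
      (poch a (p + k) * poch b p * (a + INR (p + k))) by ring.
    replace (poch a p * (poch b (p + k) * (b + INR (p + k)))) with
      (poch a p * poch b (p + k) * (b + INR (p + k))) by ring.
    apply Rmult_le_compat; try nra.
Qed.

Lemma EG_strict a b p k : 0 < a -> a < b ->
  poch a (p + S k) * poch b p < poch a p * poch b (p + S k).
Proof.
  intros Ha Hab. pose proof (EG a b p k Ha Hab).
  rewrite Nat.add_succ_r. simpl poch.
  pose proof (poch_pos a (p + k) Ha). pose proof (poch_pos b p ltac:(lra)).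
  pose proof (poch_pos a p Ha). pose proof (poch_pos b (p + k) ltac:(lra)).
  pose proof (pos_INR (p + k)).
  replace (poch a (p + k) * (a + INR (p + k)) * poch b p) with
    (poch a (p + k) * poch b p * (a + INR (p + k))) by ring.
  replace (poch a p * (poch b (p + k) * (b + INR (p + k)))) with
    (poch a p * poch b (p + k) * (b + INR (p + k))) by ring.
  apply Rle_lt_trans with (poch a p * poch b (p + k) * (a + INR (p + k))).
  - apply Rmult_le_compat_r; nra.
  - apply Rmult_lt_compat_l; nra.
Qed.

Lemma EGe a b p q : 0 < a -> a < b -> (p <= q)%nat ->
  e a q * e b p <= e a p * e b q.
Proof.
  intros Ha Hab H. unfold e. replace q with (p + (q - p))%nat by lia.
  pose proof (EG a b p (q - p) Ha Hab).
  pose proof (INR_fact_lt_0 p). pose proof (INR_fact_lt_0 (p + (q - p))).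
  unfold Rdiv. 
  replace (poch a (p + (q - p)) * / INR (Factorial.fact (p + (q - p))) * (poch b p * / INR (Factorial.fact p)))
    with ((poch a (p + (q - p)) * poch b p) * (/ INR (Factorial.fact (p + (q - p))) * / INR (Factorial.fact p))) by ring.
  replace (poch a p * / INR (Factorial.fact p) * (poch b (p + (q - p)) * / INR (Factorial.fact (p + (q - p)))))
    with ((poch a p * poch b (p + (q - p))) * (/ INR (Factorial.fact (p + (q - p))) * / INR (Factorial.fact p))) by ring.
  apply Rmult_le_compat_r; [|exact H0].
  left. apply Rmult_lt_0_compat; apply Rinv_0_lt_compat; auto.
Qed.

Lemma EGe_strict a b p q : 0 < a -> a < b -> (p < q)%nat ->
  e a q * e b p < e a p * e b q.
Proof.
  intros Ha Hab H. unfold e. replace q with (p + S (q - p - 1))%nat by lia.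
  pose proof (EG_strict a b p (q - p - 1) Ha Hab).
  pose proof (INR_fact_lt_0 p). pose proof (INR_fact_lt_0 (p + S (q - p - 1))).
  set (k := S (q - p - 1)) in *. unfold Rdiv.
  replace (poch a (p + k) * / INR (Factorial.fact (p + k)) * (poch b p * / INR (Factorial.fact p)))
    with ((poch a (p + k) * poch b p) * (/ INR (Factorial.fact (p + k)) * / INR (Factorial.fact p))) by ring.
  replace (poch a p * / INR (Factorial.fact p) * (poch b (p + k) * / INR (Factorial.fact (p + k))))
    with ((poch a p * poch b (p + k)) * (/ INR (Factorial.fact (p + k)) * / INR (Factorial.fact p))) by ring.
  apply Rmult_lt_compat_r; [|exact H0].
  apply Rmult_lt_0_compat; apply Rinv_0_lt_compat; auto.
Qed.

Lemma sum_nonneg h n : (forall i, (i <= n)%nat -> 0 <= h i) -> 0 <= sum_f_R0 h n.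
Proof.
  induction n as [|n IH]; intro H; simpl.
  - apply H; lia.
  - pose proof (H (S n) (le_n _)). assert (0 <= sum_f_R0 h n) by (apply IH; intros; apply H; lia). lra.
Qed.

Lemma sum_ge_term h n k : (forall i, (i <= n)%nat -> 0 <= h i) -> (k <= n)%nat ->
  h k <= sum_f_R0 h n.
Proof.
  induction n as [|n IH]; intros H Hk; simpl.
  - replace k with 0%nat by lia. lra.
  - destruct (Nat.eq_dec k (S n)) as [->|Hne].
    + assert (0 <= sum_f_R0 h n) by (apply sum_nonneg; intros; apply H; lia). lra.
    + pose proof (H (S n) (le_n _)). assert (h k <= sum_f_R0 h n) by (apply IH; [intros; apply H; lia|lia]). lra.
Qed.

Lemma scal_sum_l An N x : x * sum_f_R0 An N = sum_f_R0 (fun i => x * An i) N.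
Proof. rewrite scal_sum. apply sum_eq. intros; ring. Qed.

Lemma term_sign f s a b m i j : 0 < a -> a < b ->
  (forall p q k, (p <= q)%nat -> 0 <= s * (f (p + k)%nat * f q - f p * f (q + k)%nat)) ->
  (i <= m)%nat -> (j <= m - i)%nat ->
  0 <= s * ((FF f m (i + j) - FF f m j) * (gg a b m i j - gg a b m i (m - i - j))).
Proof.
  intros Ha Hab HL Hi Hj. unfold FF, gg.
  replace (m - i - (m - i - j))%nat with j by lia.
  destruct (Compare_dec.le_lt_dec (2 * j) (m - i)) as [H2|H2].
  - pose proof (HL j (m - i - j)%nat i ltac:(lia)) as K.
    replace (m - i - j + i)%nat with (m - j)%nat in K by lia.
    replace (m - (i + j))%nat with (m - i - j)%nat by lia.
    replace (j + i)%nat with (i + j)%nat in K by lia.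
    pose proof (EGe a b j (m - i - j) Ha Hab ltac:(lia)) as G.
    nra.
  - pose proof (HL (m - i - j)%nat j i ltac:(lia)) as K.
    replace (m - i - j + i)%nat with (m - j)%nat in K by lia.
    replace (m - (i + j))%nat with (m - i - j)%nat by lia.
    replace (j + i)%nat with (i + j)%nat in K by lia.
    pose proof (EGe a b (m - i - j) j Ha Hab ltac:(lia)) as G.
    nra.
Qed.

Lemma phi_sign f s a b d m : 0 < a -> a < b -> 0 < d -> (2 <= m)%nat ->
  (forall p q k, (p <= q)%nat -> 0 <= s * (f (p + k)%nat * f q - f p * f (q + k)%nat)) ->
  (forall p q, (p < q)%nat -> 0 < s * (f (p + 1)%nat * f q - f p * f (q + 1)%nat)) ->
  0 < s * phi f a b d m.
Proof.
  intros Ha Hab Hd Hm HL HS.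
  rewrite phi_decomp, scal_sum.
  set (h := fun i => e d i * TT f a b m i * s).
  assert (Hh : forall i, (i <= m)%nat -> 0 <= h i).
  { intros i Hi. unfold h. rewrite TT_sym by exact Hi. 
    pose proof (e_pos d i Hd).
    assert (0 <= sum_f_R0 (fun j => s * ((FF f m (i + j) - FF f m j) *
                     (gg a b m i j - gg a b m i (m - i - j)))) (m - i)).
    { apply sum_nonneg. intros j Hj. apply term_sign; auto. }
    rewrite <- scal_sum_l in H0. nra. }
  apply Rlt_le_trans with (h 1%nat); [|apply sum_ge_term; auto; lia].
  unfold h. rewrite TT_sym by lia.
  pose proof (e_pos d 1 Hd).
  set (t := fun j => s * ((FF f m (1 + j) - FF f m j) *
                     (gg a b m 1 j - gg a b m 1 (m - 1 - j)))).
  assert (Ht : forall j, (j <= m - 1)%nat -> 0 <= t j) by (intros; apply term_sign; auto; lia).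
  assert (H0 : t 0%nat <= sum_f_R0 t (m - 1)) by (apply sum_ge_term; auto; lia).
  assert (Ht0 : 0 < t 0%nat).
  { unfold t, FF, gg. rewrite Nat.add_0_r, !Nat.sub_0_r.
    replace (m - 1 - (m - 1))%nat with 0%nat by lia.
    pose proof (HS 0%nat (m - 1)%nat ltac:(lia)) as K.
    replace (m - 1 + 1)%nat with m in K by lia. simpl (0 + 1)%nat in K.
    pose proof (EGe_strict a b 0 (m - 1) Ha Hab ltac:(lia)) as G.
    replace (m - 1 - 0)%nat with (m - 1)%nat by lia. nra. }
  assert (Hpos : 0 < sum_f_R0 t (m - 1)) by lra. unfold t in Hpos. rewrite <- scal_sum_l in Hpos.
  match goal with |- 0 < e d 1 * (/ 2 * ?X) * s =>
    replace (e d 1 * (/ 2 * X) * s) with (e d 1 * / 2 * (s * X)) by ring end.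
  apply Rmult_lt_0_compat; [lra|lra].
Qed.

Lemma phi0 f a b d : phi f a b d 0 = 0.
Proof. unfold phi, coef. simpl. field. Qed.

Lemma phi1 f a b d : phi f a b d 1 = 0.
Proof. unfold phi, coef. simpl. field. Qed.

Lemma poch_mono u v n : 0 < u -> u <= v -> poch u n <= poch v n.
Proof.
  intros Hu Huv. induction n as [|n IH]; simpl; [lra|].
  pose proof (poch_pos u n Hu). pose proof (pos_INR n).
  apply Rmult_le_compat; try lra.
Qed.

Section Ser.
Variable f : nat -> R.
Hypothesis Hf : forall n, 0 < f n.
Variable x : R.
Hypothesis Hx : 0 < x.
Hypothesis Hex : forall a', 0 < a' -> ex_series (fun n => coef f a' n * x ^ n).

Lemma cnn al n : 0 < al -> 0 <= coef f al n * x ^ n.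
Proof.
  intro H. rewrite coef_e. pose proof (Hf n). pose proof (e_pos al n H).
  pose proof (pow_lt x n Hx). left. apply Rmult_lt_0_compat; [apply Rmult_lt_0_compat|]; auto.
Qed.

Lemma Series0 : Series (fun _ => 0) = 0.
Proof.
  rewrite (Series_ext (fun _ => 0) (fun n => 0 * (fun _ : nat => 0) n)) by (intro; ring).
  rewrite Series_scal_l. ring.
Qed.

Lemma Series_nonneg u : ex_series u -> (forall n, 0 <= u n) -> 0 <= Series u.
Proof.
  intros He Hu. rewrite <- Series0. apply Series_le; [|exact He]. intro n; split; [lra|apply Hu].
Qed.

Lemma series_pos u : ex_series u -> (forall n, 0 <= u n) -> 0 < u 2%nat -> 0 < Series u.
Proof.
  intros He Hu H2. rewrite (Series_incr_n u 3) by (auto; lia). simpl pred.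
  assert (u 2%nat <= sum_f_R0 u 2) by (apply sum_ge_term; auto).
  assert (0 <= Series (fun k => u (3 + k)%nat)).
  { apply Series_nonneg; [|intros; apply Hu]. apply (ex_series_incr_n u 3). exact He. }
  lra.
Qed.

Lemma S_pos al : 0 < al -> 0 < fser f al x.
Proof.
  intro H. unfold fser. rewrite Series_incr_1 by (apply Hex; exact H).
  assert (0 <= Series (fun k => coef f al (S k) * x ^ S k)).
  { apply Series_nonneg; [|intros; apply cnn; exact H].
    apply (ex_series_incr_1 (fun n => coef f al n * x ^ n)). apply Hex; exact H. }
  pose proof (cnn al 0 H). unfold coef in *. simpl in *. pose proof (Hf 0%nat). 
  assert (0 < f 0%nat * 1 / 1 * 1) by lra. lra.
Qed.

Lemma S_mono u v : 0 < u -> u <= v -> fser f u x <= fser f v x.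
Proof.
  intros Hu Huv. unfold fser. apply Series_le; [|apply Hex; lra].
  intro n. split; [apply cnn; exact Hu|].
  apply Rmult_le_compat_r; [left; apply pow_lt; exact Hx|].
  unfold coef. apply Rmult_le_compat_r; [left; apply Rinv_0_lt_compat, INR_fact_lt_0|].
  apply Rmult_le_compat_l; [left; apply Hf|]. apply poch_mono; auto.
Qed.

Lemma phi_is_series a b d : 0 < a -> 0 < b -> 0 < d ->
  is_series (fun m => phi f a b d m * x ^ m)
  (fser f (a + d) x * fser f b x - fser f (b + d) x * fser f a x).
Proof.
  intros Ha Hb Hd.
  set (c := fun al n => coef f al n * x ^ n).
  assert (H1 := is_series_mult_pos (c (a + d)) (c b) _ _
    (Series_correct _ (Hex (a + d) ltac:(lra))) (Series_correct _ (Hex b Hb))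
    (fun n => cnn (a + d) n ltac:(lra)) (fun n => cnn b n Hb)).
  assert (H2 := is_series_mult_pos (c (b + d)) (c a) _ _
    (Series_correct _ (Hex (b + d) ltac:(lra))) (Series_correct _ (Hex a Ha))
    (fun n => cnn (b + d) n ltac:(lra)) (fun n => cnn a n Ha)).
  pose proof (is_series_minus _ _ _ _ H1 H2) as H3.
  unfold fser.
  eapply is_series_ext; [|exact H3].
  intro m. simpl. unfold plus, opp; simpl. unfold phi.
  match goal with |- ?A + - ?B = _ => replace (A + - B) with (A - B) by ring end.
  rewrite <- minus_sum. symmetry. rewrite Rmult_comm, scal_sum. apply sum_eq. intros k Hk. unfold c.
  replace (x ^ m) with (x ^ k * x ^ (m - k)) by (rewrite <- pow_add; f_equal; lia).
  ring.
Qed.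

Lemma phi_series a b d : 0 < a -> 0 < b -> 0 < d ->
  Series (fun m => phi f a b d m * x ^ m) =
  fser f (a + d) x * fser f b x - fser f (b + d) x * fser f a x.
Proof. intros; apply is_series_unique, phi_is_series; auto. Qed.

Lemma key_sign s a b d : 0 < a -> a < b -> 0 < d ->
  (forall p q k, (p <= q)%nat -> 0 <= s * (f (p + k)%nat * f q - f p * f (q + k)%nat)) ->
  (forall p q, (p < q)%nat -> 0 < s * (f (p + 1)%nat * f q - f p * f (q + 1)%nat)) ->
  0 < s * (fser f (a + d) x * fser f b x - fser f (b + d) x * fser f a x).
Proof.
  intros Ha Hab Hd HL HS.
  rewrite <- phi_series by lra. rewrite <- Series_scal_l.
  assert (Hphi : forall m, 0 <= s * (phi f a b d m * x ^ m)).
  { intro m. destruct m as [|[|m]].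
    - rewrite phi0. lra.
    - rewrite phi1. lra.
    - pose proof (phi_sign f s a b d (S (S m)) Ha Hab Hd ltac:(lia) HL HS).
      pose proof (pow_lt x (S (S m)) Hx). nra. }
  apply series_pos; auto.
  - pose proof (phi_is_series a b d Ha ltac:(lra) Hd) as HP.
    apply (is_series_scal_l s) in HP. eexists. eapply is_series_ext; [|exact HP].
    intro; reflexivity.
  - pose proof (phi_sign f s a b d 2 Ha Hab Hd ltac:(lia) HL HS).
    pose proof (pow_lt x 2 Hx). nra.
Qed.
End Ser.

Lemma cont_gen (g : R -> R) c : 0 < c ->
  (forall u v, 0 < u -> u <= v -> g u <= g v) ->
  (forall (M : nat) y z, c - c / (2 * (INR M + 1)) <= y -> y <= z ->
      z <= c + c / (2 * (INR M + 1)) -> z - y <= c / (2 * (INR M + 1)) ->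
      INR M * (g z - g y) <= g (2 * c) - g (c / 2)) ->
  continuity_pt g c.
Proof.
  intros Hc Hmono Hb.
  unfold continuity_pt, continue_in, limit1_in, limit_in. simpl. unfold R_dist.
  intros eps Heps.
  set (K := g (2 * c) - g (c / 2)).
  assert (HK : 0 <= K) by (unfold K; pose proof (Hmono (c/2) (2*c) ltac:(lra) ltac:(lra)); lra).
  destruct (archimed_cor1 (eps / (K + 1))) as [N [HN HN0]].
  { apply Rdiv_lt_0_compat; lra. }
  assert (HNp : 0 < INR N) by (apply lt_0_INR; lia).
  assert (HKN : K + 1 < eps * INR N).
  { apply Rmult_lt_compat_r with (r := INR N * (K + 1)) in HN; [|nra].
    replace (/ INR N * (INR N * (K + 1))) with (K + 1) in HN by (field; lra).
    replace (eps / (K + 1) * (INR N * (K + 1))) with (eps * INR N) in HN by (field; lra).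
    exact HN. }
  set (w := c / (2 * (INR N + 1))).
  assert (Hw : 0 < w) by (unfold w; apply Rdiv_lt_0_compat; lra).
  exists w. split; [exact Hw|].
  intros x [_ Hx].
  destruct (Rle_or_lt c x) as [Hcx|Hcx].
  - rewrite Rabs_right in Hx by lra.
    pose proof (Hb N c x ltac:(unfold w in Hw; lra) Hcx ltac:(fold w; lra) ltac:(fold w; lra)) as B.
    fold K in B. pose proof (Hmono c x Hc Hcx).
    rewrite Rabs_right by lra. nra.
  - rewrite Rabs_left in Hx by lra.
    pose proof (Hb N x c ltac:(fold w; lra) ltac:(lra) ltac:(unfold w in Hw; lra) ltac:(fold w; lra)) as B.
    fold K in B.
    assert (0 < x).
    { assert (w <= c / 2).
      { unfold w. apply Rmult_le_reg_r with (2 * (INR N + 1)); [lra|].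
        field_simplify; [|lra]. nra. }
      lra. }
    pose proof (Hmono x c ltac:(lra) ltac:(lra)).
    rewrite Rabs_left1 by lra. nra.
Qed.

Section Cont.
Variable g : R -> R.
Hypothesis Hmono : forall u v, 0 < u -> u <= v -> g u <= g v.

Lemma cont_concave :
  (forall a b d, 0 < a -> a < b -> 0 < d -> g (b + d) - g b < g (a + d) - g a) ->
  forall c, 0 < c -> continuity_pt g c.
Proof.
  intros Hinc.
  assert (BC : forall y h (M : nat), 0 < h -> 0 < y - INR M * h ->
            INR M * (g (y + h) - g y) <= g y - g (y - INR M * h)).
  { intros y h M Hh. induction M as [|M IH]; intro Hy.
    - simpl. replace (y - 0 * h) with y by ring. lra.
    - rewrite S_INR in *. pose proof (pos_INR M).
      assert (Hy' : 0 < y - INR M * h) by nra.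
      specialize (IH Hy').
      pose proof (Hinc (y - (INR M + 1) * h) y h Hy ltac:(nra) Hh) as K.
      replace (y - (INR M + 1) * h + h) with (y - INR M * h) in K by ring.
      lra. }
  intros c Hc. apply cont_gen; [exact Hc|exact Hmono|].
  intros M y z H1 H2 H3 H4.
  set (w := c / (2 * (INR M + 1))) in *.
  pose proof (pos_INR M).
  assert (HW : (INR M + 1) * w = c / 2) by (unfold w; field; lra).
  assert (Hw : 0 < w) by (unfold w; apply Rdiv_lt_0_compat; lra).
  assert (HK : g (c / 2) <= g (2 * c)) by (apply Hmono; lra).
  assert (Hwc : w <= c / 2) by nra.
  destruct (Req_dec y z) as [<-|Hyz].
  - replace (g y - g y) with 0 by ring. lra.
  - set (h := z - y).
    assert (Hh : 0 < h) by (unfold h; lra).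
    assert (INR M * h <= INR M * w) by (apply Rmult_le_compat_l; [lra|unfold h; lra]).
    assert (HyM : c / 2 <= y - INR M * h) by lra.
    pose proof (BC y h M Hh ltac:(lra)) as B.
    replace (y + h) with z in B by (unfold h; ring).
    pose proof (Hmono (c / 2) (y - INR M * h) ltac:(lra) HyM).
    pose proof (Hmono y (2 * c) ltac:(lra) ltac:(lra)).
    lra.
Qed.

Lemma cont_convex :
  (forall a b d, 0 < a -> a < b -> 0 < d -> g (a + d) - g a < g (b + d) - g b) ->
  forall c, 0 < c -> continuity_pt g c.
Proof.
  intros Hinc.
  assert (Hw : forall a b d, 0 < a -> a <= b -> 0 < d -> g (a + d) - g a <= g (b + d) - g b).
  { intros a b d Ha Hab Hd. destruct (Req_dec a b) as [<-|Hne]; [lra|].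
    left; apply Hinc; lra. }
  assert (BV : forall y h (M : nat), 0 < y -> 0 < h ->
            INR M * (g (y + h) - g y) <= g (y + INR M * h) - g y).
  { intros y h M Hy Hh. induction M as [|M IH].
    - simpl. replace (y + 0 * h) with y by ring. lra.
    - rewrite S_INR. pose proof (pos_INR M).
      pose proof (Hw y (y + INR M * h) h Hy ltac:(nra) Hh) as K.
      replace (y + INR M * h + h) with (y + (INR M + 1) * h) in K by ring.
      lra. }
  intros c Hc. apply cont_gen; [exact Hc|exact Hmono|].
  intros M y z H1 H2 H3 H4.
  set (w := c / (2 * (INR M + 1))) in *.
  pose proof (pos_INR M).
  assert (HW : (INR M + 1) * w = c / 2) by (unfold w; field; lra).
  assert (Hw0 : 0 < w) by (unfold w; apply Rdiv_lt_0_compat; lra).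
  assert (HK : g (c / 2) <= g (2 * c)) by (apply Hmono; lra).
  assert (Hwc : w <= c / 2) by nra.
  destruct (Req_dec y z) as [<-|Hyz].
  - replace (g y - g y) with 0 by ring. lra.
  - set (h := z - y).
    assert (Hh : 0 < h) by (unfold h; lra).
    assert (INR M * h <= INR M * w) by (apply Rmult_le_compat_l; [lra|unfold h; lra]).
    assert (HyM : y + INR M * h <= 2 * c) by lra.
    assert (Hy2 : c / 2 <= y) by lra.
    pose proof (BV y h M ltac:(lra) Hh) as B.
    replace (y + h) with z in B by (unfold h; ring).
    pose proof (Hmono (c / 2) y ltac:(lra) Hy2).
    assert (0 <= INR M * h) by (apply Rmult_le_pos; lra).
    pose proof (Hmono (y + INR M * h) (2 * c) ltac:(lra) HyM).
    lra.
Qed.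
End Cont.

Lemma SC (g : R -> R) :
  (forall c, 0 < c -> continuity_pt g c) ->
  (forall p q, 0 < p -> p < q -> (g p + g q) / 2 < g ((p + q) / 2)) ->
  strictly_concave_pos g.
Proof.
  intros Hcont Hmid0.
  assert (Hmid : forall p q, 0 < p -> 0 < q -> p <> q -> (g p + g q) / 2 < g ((p + q) / 2)).
  { intros p q Hp Hq Hne. destruct (Rlt_or_le p q) as [H|H]; [apply Hmid0; auto|].
    replace ((g p + g q) / 2) with ((g q + g p) / 2) by lra.
    replace ((p + q) / 2) with ((q + p) / 2) by lra. apply Hmid0; auto. lra. }
  intros u v t Hu Hv Huv Ht.
  set (h := fun s => g (s * u + (1 - s) * v) - (s * g u + (1 - s) * g v)).
  assert (Hpos : forall s, 0 <= s <= 1 -> 0 < s * u + (1 - s) * v).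
  { intros s Hs. destruct (Req_dec s 0) as [->|Hs0]; [lra|]. nra. }
  assert (hmid : forall s1 s2, 0 <= s1 <= 1 -> 0 <= s2 <= 1 -> s1 <> s2 ->
            (h s1 + h s2) / 2 < h ((s1 + s2) / 2)).
  { intros s1 s2 H1 H2 H12. unfold h.
    assert (Hne : s1 * u + (1 - s1) * v <> s2 * u + (1 - s2) * v).
    { intro E. apply H12. apply Rmult_eq_reg_r with (u - v); [|lra]. lra. }
    pose proof (Hmid _ _ (Hpos s1 H1) (Hpos s2 H2) Hne) as K.
    replace ((s1 * u + (1 - s1) * v + (s2 * u + (1 - s2) * v)) / 2)
      with ((s1 + s2) / 2 * u + (1 - (s1 + s2) / 2) * v) in K by field.
    lra. }
  assert (hcont : forall s, 0 <= s <= 1 -> continuity_pt h s).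
  { intros s Hs. unfold h.
    change (continuity_pt (minus_fct (comp g (fun s => s * u + (1 - s) * v))
                                     (fun s => s * g u + (1 - s) * g v)) s).
    apply continuity_pt_minus.
    - apply continuity_pt_comp.
      + reg.
      + apply Hcont, Hpos, Hs.
    - reg. }
  assert (h0 : h 0 = 0) by (unfold h; replace (0 * u + (1 - 0) * v) with v by ring; ring).
  assert (h1 : h 1 = 0) by (unfold h; replace (1 * u + (1 - 1) * v) with u by ring; ring).
  assert (hnn : forall s, 0 <= s <= 1 -> 0 <= h s).
  { destruct (continuity_ab_min h 0 1 ltac:(lra) hcont) as [mx [Hmin Hmx]].
    intros s Hs. apply Rle_trans with (h mx); [|apply Hmin; exact Hs].
    destruct (Rlt_or_le (h mx) 0) as [Hneg|Hok]; [|exact Hok].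
    exfalso.
    assert (0 < mx) by (destruct (Req_dec mx 0) as [E|E]; [rewrite E in Hneg; lra|lra]).
    assert (mx < 1) by (destruct (Req_dec mx 1) as [E|E]; [rewrite E in Hneg; lra|lra]).
    set (ep := Rmin mx (1 - mx)).
    assert (0 < ep) by (unfold ep; apply Rmin_glb_lt; lra).
    assert (ep <= mx) by apply Rmin_l. assert (ep <= 1 - mx) by apply Rmin_r.
    pose proof (hmid (mx - ep) (mx + ep) ltac:(lra) ltac:(lra) ltac:(lra)) as K.
    replace ((mx - ep + (mx + ep)) / 2) with mx in K by field.
    pose proof (Hmin (mx - ep) ltac:(lra)). pose proof (Hmin (mx + ep) ltac:(lra)).
    lra. }
  set (ep := Rmin t (1 - t)).
  assert (0 < ep) by (unfold ep; apply Rmin_glb_lt; lra).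
  assert (ep <= t) by apply Rmin_l. assert (ep <= 1 - t) by apply Rmin_r.
  pose proof (hmid (t - ep) (t + ep) ltac:(lra) ltac:(lra) ltac:(lra)) as K.
  replace ((t - ep + (t + ep)) / 2) with t in K by field.
  pose proof (hnn (t - ep) ltac:(lra)). pose proof (hnn (t + ep) ltac:(lra)).
  assert (Hht : 0 < h t) by lra. unfold h in Hht. lra.
Qed.

Lemma concave_from (g : R -> R) :
  (forall u v, 0 < u -> u <= v -> g u <= g v) ->
  (forall a b d, 0 < a -> a < b -> 0 < d -> g (b + d) - g b < g (a + d) - g a) ->
  strictly_concave_pos g.
Proof.
  intros Hm Hi. apply SC.
  - apply cont_concave; auto.
  - intros p q Hp Hpq.
    pose proof (Hi p ((p + q) / 2) ((q - p) / 2) Hp ltac:(lra) ltac:(lra)) as K.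
    replace ((p + q) / 2 + (q - p) / 2) with q in K by field.
    replace (p + (q - p) / 2) with ((p + q) / 2) in K by field.
    lra.
Qed.

Lemma convex_from (g : R -> R) :
  (forall u v, 0 < u -> u <= v -> g u <= g v) ->
  (forall a b d, 0 < a -> a < b -> 0 < d -> g (a + d) - g a < g (b + d) - g b) ->
  strictly_convex_pos g.
Proof.
  intros Hm Hi.
  assert (Hc : strictly_concave_pos (fun y => - g y)).
  { apply SC.
    - intros c Hc. apply continuity_pt_opp. apply cont_convex; auto.
    - intros p q Hp Hpq.
      pose proof (Hi p ((p + q) / 2) ((q - p) / 2) Hp ltac:(lra) ltac:(lra)) as K.
      replace ((p + q) / 2 + (q - p) / 2) with q in K by field.
      replace (p + (q - p) / 2) with ((p + q) / 2) in K by field.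
      lra. }
  intros u v t Hu Hv Huv Ht. pose proof (Hc u v t Hu Hv Huv Ht). simpl in H. lra.
Qed.

Lemma ln_incr f (Hf : forall n, 0 < f n) x (Hx : 0 < x)
  (Hex : forall a', 0 < a' -> ex_series (fun n => coef f a' n * x ^ n)) s :
  forall a b d, 0 < a -> a < b -> 0 < d ->
  0 < s * (fser f (a + d) x * fser f b x - fser f (b + d) x * fser f a x) ->
  (s = 1 \/ s = -1) ->
  s * (ln (fser f (b + d) x) - ln (fser f b x)) < s * (ln (fser f (a + d) x) - ln (fser f a x)).
Proof.
  intros a b d Ha Hab Hd H Hs.
  pose proof (S_pos f Hf x Hx Hex (a + d) ltac:(lra)).
  pose proof (S_pos f Hf x Hx Hex b ltac:(lra)).
  pose proof (S_pos f Hf x Hx Hex (b + d) ltac:(lra)).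
  pose proof (S_pos f Hf x Hx Hex a ltac:(lra)).
  destruct Hs as [Hs1 | Hs1]; subst s.
  - assert (ln (fser f (b + d) x * fser f a x) < ln (fser f (a + d) x * fser f b x)).
    { apply ln_increasing; [apply Rmult_lt_0_compat; auto|lra]. }
    rewrite !ln_mult in H4 by auto. lra.
  - assert (ln (fser f (a + d) x * fser f b x) < ln (fser f (b + d) x * fser f a x)).
    { apply ln_increasing; [apply Rmult_lt_0_compat; auto|lra]. }
    rewrite !ln_mult in H4 by auto. lra.
Qed.

Theorem theorem1 (f : nat -> R) (Hf : forall n, 0 < f n)
  (a b d : R) (ha : 0 < a) (hab : a < b) (hd : 0 < d) :
  phi f a b d 0 = 0 /\ phi f a b d 1 = 0 /\
  ((forall n : nat, f (S (S n)) / f (S n) < f (S n) / f n) ->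
     (forall m : nat, (2 <= m)%nat -> 0 < phi f a b d m) /\
     (forall x : R, 0 < x ->
        (forall a' : R, 0 < a' -> ex_series (fun n => coef f a' n * x ^ n)) ->
        strictly_concave_pos (fun a' => ln (fser f a' x)))) /\
  ((forall n : nat, f (S n) / f n < f (S (S n)) / f (S n)) ->
     (forall m : nat, (2 <= m)%nat -> phi f a b d m < 0) /\
     (forall x : R, 0 < x ->
        (forall a' : R, 0 < a' -> ex_series (fun n => coef f a' n * x ^ n)) ->
        strictly_convex_pos (fun a' => ln (fser f a' x)))).
Proof.
  split; [apply phi0|]. split; [apply phi1|]. split.
  - intro Hc.
    assert (HL : forall p q k, (p <= q)%nat -> 0 <= 1 * (f (p + k)%nat * f q - f p * f (q + k)%nat)).
    { intros p q k H. pose proof (LF_concave f Hf Hc p q k H). lra. }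
    assert (HS : forall p q, (p < q)%nat -> 0 < 1 * (f (p + 1)%nat * f q - f p * f (q + 1)%nat)).
    { intros p q H. pose proof (LF_concave_strict f Hf Hc p q 0 H). lra. }
    split.
    + intros m Hm. pose proof (phi_sign f 1 a b d m ha hab hd Hm HL HS). lra.
    + intros x Hx Hex. apply concave_from.
      * intros u v Hu Huv. apply ln_le; [apply S_pos; auto|apply S_mono; auto].
      * intros a0 b0 d0 Ha0 Hab0 Hd0.
        pose proof (key_sign f Hf x Hx Hex 1 a0 b0 d0 Ha0 Hab0 Hd0 HL HS) as K.
        pose proof (ln_incr f Hf x Hx Hex 1 a0 b0 d0 Ha0 Hab0 Hd0 K (or_introl eq_refl)). lra.
  - intro Hv.
    assert (HL : forall p q k, (p <= q)%nat -> 0 <= -1 * (f (p + k)%nat * f q - f p * f (q + k)%nat)).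
    { intros p q k H. pose proof (LF_convex f Hf Hv p q k H). lra. }
    assert (HS : forall p q, (p < q)%nat -> 0 < -1 * (f (p + 1)%nat * f q - f p * f (q + 1)%nat)).
    { intros p q H. pose proof (LF_convex_strict f Hf Hv p q 0 H). lra. }
    split.
    + intros m Hm. pose proof (phi_sign f (-1) a b d m ha hab hd Hm HL HS). lra.
    + intros x Hx Hex. apply convex_from.
      * intros u v Hu Huv. apply ln_le; [apply S_pos; auto|apply S_mono; auto].
      * intros a0 b0 d0 Ha0 Hab0 Hd0.
        pose proof (key_sign f Hf x Hx Hex (-1) a0 b0 d0 Ha0 Hab0 Hd0 HL HS) as K.
        pose proof (ln_incr f Hf x Hx Hex (-1) a0 b0 d0 Ha0 Hab0 Hd0 K (or_intror eq_refl)). lra.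
Qed.
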